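(* Let $(X,\|\cdot\|)$ be a real Banach space and $C\subseteq B_X$ a nonempty absolutely convex closed subset such that every convex combination of slices of $C$ has $\|\cdot\|$-diameter $2$. Then for every $\varepsilon>0$ there is an equivalent norm $|\cdot|$ on $X$ such that every convex combination of slices of $B_{(X,|\cdot|)}$ has $|\cdot|$-diameter at least $2-\varepsilon$.
   Context: For a bounded set $A$ in a Banach space, a slice of $A$ is a nonempty set of the form $S(A,f,\alpha)=\{a\in A: f(a)>\sup_Af-\alpha\}$ with $f$ a nonzero continuous linear functional and $\alpha>0$. A convex combination of slices of $A$ is a Minkowski sum $\sum_{i=1}^n\lambda_iS_i=\{\sum_i\lambda_is_i: s_i\in S_i\}$ with $S_i$ slices of $A$, $\lambda_i>0$, $\sum_i\lambda_i=1$. Absolutely convex means convex and symmetric ($C=-C$). *)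

(* Defs.v *)
From HB Require Import structures.
From mathcomp Require Import all_boot all_order all_algebra.
From mathcomp Require Import all_classical all_reals all_analysis.
Set Implicit Arguments. Unset Strict Implicit. Unset Printing Implicit Defensive.
Import Order.TTheory GRing.Theory Num.Theory.
Import numFieldNormedType.Exports.
Local Open Scope classical_set_scope.
Local Open Scope ring_scope.

Section Defs.
Context {R : realType} {X : normedModType R}.

Definition lin_functional (f : X -> R) : Prop :=
  forall (a : R) (x y : X), f (a *: x + y) = a * f x + f y.

Definition slice (A : set X) (f : X -> R) (alpha : R) : set X :=
  [set a | A a /\ sup (f @` A) - alpha < f a].

Definition is_slice (A : set X) (S : set X) : Prop :=
  exists (f : X -> R) (alpha : R),
    [/\ lin_functional f, continuous f, (exists x, f x != 0), 0 < alpha &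
        (S = slice A f alpha /\ S !=set0)].

Definition is_ccslices (A : set X) (D : set X) : Prop :=
  exists (n : nat) (lam : 'I_n -> R) (S : 'I_n -> set X),
    [/\ (forall i, 0 < lam i), \sum_(i < n) lam i = 1,
        (forall i, is_slice A (S i)) &
        D = [set x | exists s : 'I_n -> X,
                       (forall i, S i (s i)) /\ x = \sum_(i < n) lam i *: s i]].

Definition diam (N : X -> R) (A : set X) : \bar R :=
  ereal_sup [set ((N (x - y))%:E) | x in A & y in A].

Definition is_norm (N : X -> R) : Prop :=
  [/\ (forall x y, N (x + y) <= N x + N y),
      (forall (a : R) x, N (a *: x) = `|a| * N x) &
      (forall x, N x = 0 -> x = 0)].

Definition equiv_norm (N : X -> R) : Prop :=
  is_norm N /\ exists m M : R, [/\ 0 < m, 0 < M &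
    forall x, m * `|x| <= N x /\ N x <= M * `|x|].

Definition absolutely_convex (C : set X) : Prop :=
  (forall x y (t : R), C x -> C y -> 0 <= t <= 1 -> C (t *: x + (1 - t) *: y))
  /\ (forall x, C x -> C (- x)).

Definition unit_ball (N : X -> R) : set X := [set x | N x <= 1].

End Defs.

(* Main.v *)
Require Import Defs.
From HB Require Import structures.
From mathcomp Require Import all_boot all_order all_algebra.
From mathcomp Require Import all_classical all_reals all_analysis.
From mathcomp Require Import ring lra.
Import Order.TTheory GRing.Theory Num.Theory.
Import numFieldNormedType.Exports.
Local Open Scope classical_set_scope.
Local Open Scope ring_scope.
Set Implicit Arguments. Unset Strict Implicit.

Section S.
Context {R : realType} {X : normedModType R}.

Lemma lf0 (f : X -> R) : lin_functional f -> f 0 = 0.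
Proof. move=> H; have := H 1 0 0; rewrite scale1r addr0 mul1r.
by move/(congr1 (fun z => z - f 0)); rewrite addrK subrr => h0; rewrite -h0. Qed.

Lemma lfZ (f : X -> R) a x : lin_functional f -> f (a *: x) = a * f x.
Proof. move=> H; have := H a x 0; by rewrite addr0 lf0 // addr0. Qed.

Lemma lfD (f : X -> R) x y : lin_functional f -> f (x + y) = f x + f y.
Proof. move=> H; have := H 1 x y; by rewrite scale1r mul1r. Qed.

Lemma lf_bounded (f : X -> R) : lin_functional f -> continuous f ->
  exists M, 0 < M /\ forall x : X, `|x| <= 1 -> `|f x| <= M.
Proof.
move=> Hl Hc.
have H0 : \forall t \near (0:X), `|f 0 - f t| < 1 := cvgr_dist_lt _ _ (Hc 0) 1 ltr01.
have H1 := H0 (nbhs_filter 0). have [r /= r0 Hr] := iffLR (nbhs_ballP _ _) H1.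
exists (2 / r); split; first by rewrite divr_gt0.
move=> x x1.
have : `|f 0 - f ((r/2) *: x)| < 1.
  apply: Hr; rewrite -ball_normE /= sub0r normrN normrZ.
  rewrite gtr0_norm ?divr_gt0 //.
  apply: (le_lt_trans (ler_wpM2l _ x1)); first by rewrite ltW // divr_gt0.
  by rewrite mulr1 ltr_pdivrMr // ltr_pMr // ltr1n.
have f0 : f 0 = 0 := lf0 Hl.
rewrite f0 sub0r normrN lfZ // normrM gtr0_norm ?divr_gt0 // => h.
rewrite ler_pdivlMr //; apply: ltW.
by move: h; rewrite mulrC mulrA ltr_pdivrMr // mul1r.
Qed.

Section Norm.
Variables (C : set X) (d : R).
Hypothesis HC : absolutely_convex C.
Hypothesis C0 : C 0.
Hypothesis Cb : C `<=` unit_ball (fun x : X => `|x|).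
Hypothesis d0 : 0 < d.

Definition Tset (x : X) : set R :=
  [set t | 0 < t /\ exists c y, [/\ C c, `|y| <= 1 & x = t *: (c + d *: y)]].
Definition Nrm (x : X) : R := inf (Tset x).

Lemma CZ s c : 0 <= s <= 1 -> C c -> C (s *: c).
Proof.
move=> hs Cc; have := HC.1 _ _ _ Cc C0 hs.
by rewrite scaler0 addr0.
Qed.

Lemma T_up x t t' : Tset x t -> t <= t' -> Tset x t'.
Proof.
move=> [t0 [c [y [Cc y1 ->]]]] tt'.
have t'0 : 0 < t' by apply: lt_le_trans tt'.
have hs : 0 <= t / t' <= 1.
  by apply/andP; split; [rewrite divr_ge0 // ltW | rewrite ler_pdivrMr // mul1r].
split=> //; exists ((t / t') *: c), ((t / t') *: y); split.
- exact: CZ.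
- rewrite normrZ ger0_norm ?(andP hs).1 //.
  case/andP: hs => h0 h1; rewrite -(mulr1 1); apply: ler_pM => //.
- rewrite !scalerDr !scalerA; have t'n : t' != 0 by rewrite gt_eqF.
  by congr (_ *: _ + _ *: _); field.
Qed.

Lemma T_big x t : `|x| / d < t -> Tset x t.
Proof.
move=> ht.
have t0 : 0 < t by apply: le_lt_trans ht; rewrite divr_ge0 // ltW.
have td : t * d != 0 by rewrite mulf_neq0 // gt_eqF.
split=> //; exists 0, ((t * d)^-1 *: x); split=> //.
- rewrite normrZ ger0_norm ?invr_ge0 ?mulr_ge0 ?ltW //.
  by rewrite mulrC ltr_pdivrMr ?mulr_gt0 // mul1r -ltr_pdivrMr.
- by rewrite scalerDr scaler0 add0r scalerA scalerA divff // scale1r.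
Qed.

Lemma T_lb x : has_lbound (Tset x).
Proof. by exists 0 => t [t0 _]; apply: ltW. Qed.

Lemma T_ne x : Tset x !=set0.
Proof. by exists (`|x| / d + 1); apply: T_big; rewrite ltrDl. Qed.

Lemma N_le x t : Tset x t -> Nrm x <= t.
Proof. by move=> h; apply: ge_inf (T_lb x) _ h. Qed.

Lemma N_lt x t : Nrm x < t -> Tset x t.
Proof.
move=> h; have [e Te et] : exists2 e, Tset x e & e < Nrm x + (t - Nrm x).
  by apply: inf_adherent; [rewrite subr_gt0 | split; [apply: T_ne | apply: T_lb]].
by apply: T_up Te _; apply: ltW; move: et; rewrite addrC subrK.
Qed.

Lemma N_ge0 x : 0 <= Nrm x.
Proof. by apply: lb_le_inf (T_ne x) _ => t [t0 _]; apply: ltW. Qed.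

Lemma T_norm x t : Tset x t -> `|x| <= t * (1 + d).
Proof.
move=> [t0 [c [y [Cc y1 ->]]]].
rewrite normrZ (ger0_norm (ltW t0)) ler_pM2l //.
apply: (le_trans (ler_normD _ _)); rewrite normrZ (ger0_norm (ltW d0)).
apply: lerD; first exact: Cb.
by rewrite -{2}(mulr1 d) ler_pM2l.
Qed.

Lemma N_lower x : `|x| <= (1 + d) * Nrm x.
Proof.
apply/ler_addgt0Pr => e e0.
have hd : 0 < 1 + d by rewrite addr_gt0.
have := T_norm (N_lt (_ : Nrm x < Nrm x + e / (1 + d))).
rewrite ltrDl divr_gt0 // => /(_ isT).
by rewrite mulrDl mulrC [e / _ * _]mulrC mulrCA divff ?mulr1 // gt_eqF.
Qed.

Lemma N_upper x : Nrm x <= `|x| / d.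
Proof.
apply/ler_addgt0Pr => e e0; apply: N_le; apply: T_big.
by rewrite ltrDl.
Qed.

Lemma T_add x x' t s : Tset x t -> Tset x' s -> Tset (x + x') (t + s).
Proof.
move=> [t0 [c [y [Cc y1 ->]]]] [s0 [c' [y' [Cc' y1' ->]]]].
have ts0 : 0 < t + s by rewrite addr_gt0.
set u := t / (t + s).
have hu : 0 <= u <= 1.
  apply/andP; split; first by rewrite divr_ge0 // ltW.
  by rewrite ler_pdivrMr // mul1r lerDl ltW.
have [u0 u1] := andP hu.
split=> //; exists (u *: c + (1 - u) *: c'), (u *: y + (1 - u) *: y'); split.
- exact: HC.1.
- apply: (le_trans (ler_normD _ _)); rewrite !normrZ -normrM -/u (ger0_norm u0).
  rewrite (ger0_norm (_ : 0 <= 1 - u)) ?subr_ge0 //.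
  apply: (@le_trans _ _ (u * 1 + (1 - u) * 1)); last by rewrite !mulr1 addrC subrK.
  by apply: lerD; apply: ler_wpM2l => //; rewrite subr_ge0.
- have tsn : t + s != 0 by rewrite gt_eqF.
  rewrite !scalerDr !scalerA [RHS]addrACA /u.
  by congr (_ + _ + (_ + _)); congr (_ *: _); field.
Qed.

Lemma N_triangle x y : Nrm (x + y) <= Nrm x + Nrm y.
Proof.
apply/ler_addgt0Pr => e e0.
have e2 : 0 < e / 2 by rewrite divr_gt0.
have h1 : Tset x (Nrm x + e / 2) by apply: N_lt; rewrite ltrDl.
have h2 : Tset y (Nrm y + e / 2) by apply: N_lt; rewrite ltrDl.
apply: le_trans (N_le (T_add h1 h2)) _.
by rewrite -addrA [e / 2 + _]addrC -!addrA -splitr addrA.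
Qed.

Lemma N0 : Nrm 0 = 0.
Proof.
apply/eqP; rewrite eq_le N_ge0 andbT.
by apply: le_trans (N_upper 0) _; rewrite normr0 mul0r.
Qed.

Lemma T_scale a x t : a != 0 -> Tset x t -> Tset (a *: x) (`|a| * t).
Proof.
move=> an [t0 [c [y [Cc y1 ->]]]].
split; first by rewrite mulr_gt0 // normr_gt0.
case: (ltrgt0P a) an => // ha _.
- exists c, y; split=> //.
  by rewrite scalerA.
- exists (- c), (- y); split.
  + exact: HC.2.
  + by rewrite normrN.
  + rewrite scalerA mulNr scaleNr -scalerN; congr (_ *: _).
    by rewrite opprD opprK scalerN opprK.
Qed.

Lemma N_scale_le a x : Nrm (a *: x) <= `|a| * Nrm x.
Proof.
have [->|an] := eqVneq a 0.
  by rewrite scale0r N0 normr0 mul0r.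
have a0 : 0 < `|a| by rewrite normr_gt0.
apply/ler_addgt0Pr => e e0.
have h : Tset x (Nrm x + e / `|a|) by apply: N_lt; rewrite ltrDl divr_gt0.
apply: le_trans (N_le (T_scale an h)) _.
by rewrite mulrDr mulrCA divff ?mulr1 // gt_eqF.
Qed.

Lemma N_scale a x : Nrm (a *: x) = `|a| * Nrm x.
Proof.
have [->|an] := eqVneq a 0.
  by rewrite scale0r N0 normr0 mul0r.
apply/eqP; rewrite eq_le N_scale_le /=.
have a0 : 0 < `|a| by rewrite normr_gt0.
have := N_scale_le a^-1 (a *: x).
rewrite scalerA mulVf // scale1r normrV ?unitfE //.
by rewrite -ler_pdivlMl // invrK.
Qed.

Lemma N_def x : Nrm x = 0 -> x = 0.
Proof.
move=> h; apply/normr0_eq0/eqP; rewrite eq_le normr_ge0 andbT.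
by have := N_lower x; rewrite h mulr0.
Qed.

Lemma U1 c y : C c -> `|y| <= 1 -> Nrm (c + d *: y) <= 1.
Proof. by move=> Cc y1; apply: N_le; split=> //; exists c, y; rewrite scale1r. Qed.

Definition Bx : set X := [set y | `|y| <= 1].

Lemma hsup_C f : lin_functional f -> continuous f -> has_sup (f @` C).
Proof.
move=> Hl Hc; have [M [M0 HM]] := lf_bounded Hl Hc.
split; first by exists (f 0), 0.
exists M => _ [z Cz <-]; apply: le_trans (ler_norm _) (HM _ (Cb Cz)).
Qed.

Lemma hsup_B f : lin_functional f -> continuous f -> has_sup (f @` Bx).
Proof.
move=> Hl Hc; have [M [M0 HM]] := lf_bounded Hl Hc.
split; first by exists (f 0), 0 => //; rewrite /Bx /= normr0.
exists M => _ [z Cz <-]; apply: le_trans (ler_norm _) (HM _ Cz).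
Qed.

Lemma U2 f u : lin_functional f -> continuous f -> Nrm u <= 1 ->
  f u <= sup (f @` C) + d * sup (f @` Bx).
Proof.
move=> Hl Hc Nu.
have hC := hsup_C Hl Hc; have hB := hsup_B Hl Hc.
have f0 : f 0 = 0 := lf0 Hl.
have a0 : 0 <= sup (f @` C) by rewrite -f0; apply: sup_upper_bound => //; exists 0.
have b0 : 0 <= sup (f @` Bx).
  by rewrite -f0; apply: sup_upper_bound => //; exists 0 => //; rewrite /Bx /= normr0.
set a := sup (f @` C) in a0 *; set b := sup (f @` Bx) in b0 *.
set K := a + d * b.
have K0 : 0 <= K by rewrite addr_ge0 // mulr_ge0 // ltW.
apply/ler_addgt0Pr => e e0.
set q := e / (K + 1).
have K1 : 0 < K + 1 by lra.
have q0 : 0 <= q by rewrite divr_ge0 // ltW.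
have qe : q * (K + 1) = e by rewrite /q divfK // gt_eqF.
have [_ [c [y [Cc y1 ->]]]] : Tset u (1 + q).
  by apply: N_lt; apply: le_lt_trans Nu _; rewrite ltrDl /q divr_gt0.
rewrite lfZ // lfD // lfZ //.
have hc : f c <= a by apply: sup_upper_bound => //; exists c.
have hy : f y <= b by apply: sup_upper_bound => //; exists y.
have hdy : d * f y <= d * b by rewrite ler_pM2l.
have : (1 + q) * (f c + d * f y) <= (1 + q) * K.
  by rewrite ler_pM2l; [rewrite /K lerD | lra].
move=> h; apply: le_trans h _.
rewrite -qe; nra.
Qed.

Lemma slice_trans S : is_slice (unit_ball Nrm) S ->
  exists p : set X * X, is_slice C p.1 /\ (forall s, p.1 s -> S (s + p.2)).
Proof.
move=> [f [al [Hl Hc Hnz al0 [-> Sne]]]].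
have hC := hsup_C Hl Hc; have hB := hsup_B Hl Hc.
have al2 : 0 < al / 2 by rewrite divr_gt0.
have [_ [c Cc <-] hc] := sup_adherent al2 hC.
have ald : 0 < al / (2 * d) by rewrite divr_gt0 // mulr_gt0.
have [_ [y y1 <-] hy] := sup_adherent ald hB.
exists (slice C f (al / 2), d *: y); split.
  exists f, (al / 2); split=> //; split=> //.
  by exists c; split.
move=> s [Cs hs] /=; split; first exact: U1.
have hU : sup (f @` unit_ball Nrm) <= sup (f @` C) + d * sup (f @` Bx).
  apply: ge_sup; first by exists (f 0), 0 => //; rewrite /unit_ball /= N0 ler01.
  by move=> _ [u Uu <-]; apply: U2.
rewrite lfD // lfZ //.
have hdy : d * (sup (f @` Bx) - al / (2 * d)) < d * f y by rewrite ltr_pM2l.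
have e : d * (sup (f @` Bx) - al / (2 * d)) = d * sup (f @` Bx) - al / 2.
  by field; rewrite gt_eqF.
rewrite e in hdy.
lra.
Qed.

End Norm.
End S.

Theorem mainTheorem12 (R : realType) (X : completeNormedModType R) (C : set X) :
  C !=set0 -> absolutely_convex C -> closed C ->
  C `<=` unit_ball (fun x : X => `|x|) ->
  (forall D, is_ccslices C D -> diam (fun x : X => `|x|) D = 2%:E) ->
  forall eps : R, 0 < eps ->
  exists N : X -> R, equiv_norm N /\
    forall D, is_ccslices (unit_ball N) D -> ((2 - eps)%:E <= diam N D)%E.
Proof.
move=> [c0 Cc0] HC Ccl Cb Hdiam eps eps0.
have C0 : C 0.
  have := HC.1 _ _ (1/2) Cc0 (HC.2 _ Cc0).
  have -> : (1 - 1/2 : R) = 1/2 by field.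
  rewrite scalerN subrr; apply; lra.
set d := eps / 4.
have d0 : 0 < d by rewrite /d divr_gt0.
exists (Nrm C d); split.
  split; first split.
  - exact: N_triangle.
  - exact: N_scale.
  - exact: N_def.
  exists (1 / (1 + d)), (1 / d); split.
  - by rewrite divr_gt0 // addr_gt0.
  - by rewrite divr_gt0.
  move=> x; split.
    by rewrite mul1r mulrC ler_pdivrMr ?addr_gt0 // mulrC N_lower.
  by rewrite mul1r mulrC N_upper.
move=> D [n [lam [S [lam0 lam1 HS ->]]]].
have : forall i, exists p : set X * X, is_slice C p.1 /\ (forall s, p.1 s -> S i (s + p.2)).
  by move=> i; apply: (@slice_trans _ _ C d) => //; exact: HS.
case/choice => P HP.
set D' := [set x | exists s : 'I_n -> X,
                       (forall i, (P i).1 (s i)) /\ x = \sum_(i < n) lam i *: s i].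
have hD' : is_ccslices C D'.
  by exists n, lam, (fun i => (P i).1); split => // i; exact: (HP i).1.
have Hd2 := Hdiam _ hD'.
have : ((2 - d)%:E < diam (fun x : X => `|x|%R) D')%E.
  by rewrite Hd2 lte_fin; lra.
case/ereal_sup_gt => _ [x Dx [x' Dx' <-]].
rewrite lte_fin => hxx.
set z := \sum_(i < n) lam i *: (P i).2.
have inD : forall w, D' w -> [set x | exists s : 'I_n -> X,
          (forall i, S i (s i)) /\ x = \sum_(i < n) lam i *: s i] (w + z).
  move=> w [s [Hs ->]]; exists (fun i => s i + (P i).2); split.
    by move=> i; apply: (HP i).2.
  by rewrite /z -big_split; apply: eq_bigr => i _; rewrite scalerDr.
apply: le_trans (ereal_sup_ubound _).
  2: { exists (x + z); first exact: inD.
       exists (x' + z); first exact: inD.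
       reflexivity. }
rewrite lee_fin opprD addrACA subrr addr0.
have : `|x - x'| <= (1 + d) * Nrm C d (x - x') by apply: N_lower.
move=> hN.
have hde : eps = 4 * d by rewrite /d; field.
rewrite hde -(@ler_pM2l _ (1 + d)); last by lra.
have : 0 <= d * d by rewrite mulr_ge0 // ltW.
nra.
Qed.
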